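(* The (unital) $G$-graded ring $S$ is epsilon-strongly graded if and only if $S$ is nearly epsilon-strongly graded and $S_g$ is a finitely generated left $R$-module for every $g\in G$.
   Context: $G$ is a group with identity $e$; $S=\bigoplus_{g\in G}S_g$ is an associative unital ring graded by $G$ ($S_gS_h\subseteq S_{gh}$), $R=S_e$, and $XY$ denotes finite sums of products. For a ring $A$, a left $A$-module $M$ is s-unital if for each $m\in M$ there is $a\in A$ with $am=m$ (right analogously); an $(A,B)$-bimodule is s-unital if left s-unital over $A$ and right s-unital over $B$. $S$ is nearly epsilon-strongly graded if each $S_g$ is an s-unital $(S_gS_{g^{-1}},S_{g^{-1}}S_g)$-bimodule. $S$ is epsilon-strongly graded if each $S_g$ is a unital $(S_gS_{g^{-1}},S_{g^{-1}}S_g)$-bimodule, i.e. $S_gS_{g^{-1}}$ has an identity $\epsilon_g$ with $\epsilon_gs=s=s\epsilon_{g^{-1}}$ for $s\in S_g$. *)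

(* Defs.v *)
From HB Require Import structures.
From mathcomp Require Import all_boot all_algebra.
Set Implicit Arguments. Unset Strict Implicit. Unset Printing Implicit Defensive.
Import GRing.Theory.
Local Open Scope ring_scope.

Section Grading.
Variables (G : groupType) (S : pzRingType).

Definition additive_subgroup (A : S -> Prop) : Prop :=
  A 0 /\ (forall x y, A x -> A y -> A (x - y)).

Definition is_grading (Sg : G -> S -> Prop) : Prop :=
  [/\ (forall g, additive_subgroup (Sg g)),
      (forall g h x y, Sg g x -> Sg h y -> Sg (g * h)%g (x * y)),
      (forall s : S, exists l : seq (G * S),
          (forall p, p \in l -> Sg p.1 p.2) /\ s = \sum_(p <- l) p.2) &
      (forall l : seq (G * S), uniq (map fst l) ->
          (forall p, p \in l -> Sg p.1 p.2) ->
          \sum_(p <- l) p.2 = 0 -> forall p, p \in l -> p.2 = 0)].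

Definition prodset (X Y : S -> Prop) : S -> Prop :=
  fun z => exists l : seq (S * S),
    (forall p, p \in l -> X p.1 /\ Y p.2) /\ z = \sum_(p <- l) (p.1 * p.2).

(* nearly epsilon-strongly graded: each Sg g is an s-unital
   (Sg g Sg g^-1, Sg g^-1 Sg g)-bimodule *)
Definition nearly_epsilon_strongly_graded (Sg : G -> S -> Prop) : Prop :=
  forall g : G, forall s, Sg g s ->
    (exists a, prodset (Sg g) (Sg g^-1%g) a /\ a * s = s) /\
    (exists b, prodset (Sg g^-1%g) (Sg g) b /\ s * b = s).

Definition is_identity_of (A : S -> Prop) (e : S) : Prop :=
  A e /\ forall x, A x -> e * x = x /\ x * e = x.

(* epsilon-strongly graded: each Sg g is a unital
   (Sg g Sg g^-1, Sg g^-1 Sg g)-bimodule *)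
Definition epsilon_strongly_graded (Sg : G -> S -> Prop) : Prop :=
  forall g : G, exists e e' : S,
    [/\ is_identity_of (prodset (Sg g) (Sg g^-1%g)) e,
        is_identity_of (prodset (Sg g^-1%g) (Sg g)) e' &
        forall s, Sg g s -> e * s = s /\ s * e' = s].

Definition fin_gen_left_module (R A : S -> Prop) : Prop :=
  exists gens : seq S, (forall x, x \in gens -> A x) /\
    forall s, A s -> exists rs : seq S,
      [/\ size rs = size gens, (forall r, r \in rs -> R r) &
          s = \sum_(i < size gens) rs`_i * gens`_i].
End Grading.

(* Main.v *)
Require Import Defs.
From HB Require Import structures.
From mathcomp Require Import all_boot all_algebra.
Local Open Scope ring_scope.
Import GRing.Theory.
Set Implicit Arguments.

Section Aux.
Variables (G : groupType) (S : pzRingType).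
Implicit Types (X Y A M : S -> Prop).

Lemma sub_add A x y : additive_subgroup A -> A x -> A y -> A (x + y).
Proof.
move=> [A0 AB] Ax Ay; have := AB x (0 - y) Ax (AB _ _ A0 Ay).
by rewrite sub0r opprK.
Qed.

Lemma sub_sum A (T : eqType) (l : seq T) (F : T -> S) :
  additive_subgroup A -> (forall p, p \in l -> A (F p)) ->
  A (\sum_(p <- l) F p).
Proof.
move=> HA; elim: l => [|p l IH] H; first by rewrite big_nil; case: HA.
rewrite big_cons; apply: sub_add => //; first by apply: H; rewrite inE eqxx.
by apply: IH => q Hq; apply: H; rewrite inE Hq orbT.
Qed.

Lemma prodset0 X Y : prodset X Y 0.
Proof. by exists [::]; split => //; rewrite big_nil. Qed.

Lemma prodset_add X Y a b : prodset X Y a -> prodset X Y b -> prodset X Y (a + b).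
Proof.
move=> [l [Hl ->]] [l' [Hl' ->]]; exists (l ++ l'); split; last by rewrite big_cat.
by move=> p; rewrite mem_cat => /orP [] ?; [apply: Hl | apply: Hl'].
Qed.

Lemma prodset_lmul X Y c a : (forall x, X x -> X (c * x)) ->
  prodset X Y a -> prodset X Y (c * a).
Proof.
move=> Hc [l [Hl ->]]; exists (map (fun p => (c * p.1, p.2)) l); split.
  move=> p /mapP [q Hq ->] /=; have [? ?] := Hl q Hq; split => //; exact: Hc.
by rewrite big_map mulr_sumr; apply: eq_bigr => p _; rewrite mulrA.
Qed.

Lemma prodset_mul X Y a b :
  (forall x y x', X x -> Y y -> X x' -> X (x * y * x')) ->
  prodset X Y a -> prodset X Y b -> prodset X Y (a * b).
Proof.
move=> H [l [Hl ->]] Hb; elim: l Hl => [|p l IH] Hl.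
  by rewrite big_nil mul0r; apply: prodset0.
rewrite big_cons mulrDl; apply: prodset_add.
  have [? ?] := Hl p (mem_head _ _).
  by apply: prodset_lmul => // x Hx; apply: H.
by apply: IH => q Hq; apply: Hl; rewrite inE Hq orbT.
Qed.

Lemma prodset_sub X Y a b : (forall x, X x -> X (-1 * x)) ->
  (forall x y x', X x -> Y y -> X x' -> X (x * y * x')) ->
  prodset X Y a -> prodset X Y b -> prodset X Y (a + b - b * a).
Proof.
move=> Hn H Ha Hb; apply: prodset_add; first exact: prodset_add.
rewrite -mulN1r; apply: prodset_lmul => //; exact: prodset_mul.
Qed.

Lemma sum_lunit (l : seq (S * S)) c :
  (forall p, p \in l -> c * p.1 = p.1) ->
  c * \sum_(p <- l) p.1 * p.2 = \sum_(p <- l) p.1 * p.2.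
Proof.
move=> H; rewrite mulr_sumr [RHS]big_seq big_seq; apply: eq_bigr => p Hp.
by rewrite mulrA H.
Qed.

Lemma sum_runit (l : seq (S * S)) c :
  (forall p, p \in l -> p.2 * c = p.2) ->
  (\sum_(p <- l) p.1 * p.2) * c = \sum_(p <- l) p.1 * p.2.
Proof.
move=> H; rewrite mulr_suml [RHS]big_seq big_seq; apply: eq_bigr => p Hp.
by rewrite -mulrA H.
Qed.

Lemma common_left A M : A 0 ->
  (forall a b, A a -> A b -> A (a + b - b * a)) ->
  (forall m, M m -> exists a, A a /\ a * m = m) ->
  (forall m a, M m -> A a -> M (m - a * m)) ->
  forall l : seq S, (forall m, m \in l -> M m) ->
  exists a, A a /\ forall m, m \in l -> a * m = m.
Proof.
move=> A0 Acl Hu Mcl l0; move: {2}(size l0) (leqnn (size l0)) => n.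
elim: n l0 => [|n IH] [|m l] //= Hs Hl; try by exists 0; split.
have Mm : M m by apply: Hl; rewrite inE eqxx.
have [a1 [Aa1 Ha1]] := Hu m Mm.
have Hl' : forall x, x \in map (fun x => x - a1 * x) l -> M x.
  move=> x /mapP [y Hy ->]; apply: Mcl => //; by apply: Hl; rewrite inE Hy orbT.
have Hsz : leq (size (map (fun x => x - a1 * x) l)) n by rewrite size_map.
have [a' [Aa' Ha']] := IH _ Hsz Hl'.
exists (a1 + a' - a' * a1); split; first exact: Acl.
move=> x; rewrite inE => /orP [/eqP ->|Hx].
  by rewrite mulrBl mulrDl -mulrA Ha1 addrK.
have := Ha' (x - a1 * x) (map_f _ Hx).
by rewrite mulrBl mulrDl mulrBr mulrA -addrA => ->; rewrite addrC subrK.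
Qed.

Lemma common_right A M : A 0 ->
  (forall a b, A a -> A b -> A (a + b - a * b)) ->
  (forall m, M m -> exists a, A a /\ m * a = m) ->
  (forall m a, M m -> A a -> M (m - m * a)) ->
  forall l : seq S, (forall m, m \in l -> M m) ->
  exists a, A a /\ forall m, m \in l -> m * a = m.
Proof.
move=> A0 Acl Hu Mcl l0; move: {2}(size l0) (leqnn (size l0)) => n.
elim: n l0 => [|n IH] [|m l] //= Hs Hl; try by exists 0; split.
have Mm : M m by apply: Hl; rewrite inE eqxx.
have [a1 [Aa1 Ha1]] := Hu m Mm.
have Hl' : forall x, x \in map (fun x => x - x * a1) l -> M x.
  move=> x /mapP [y Hy ->]; apply: Mcl => //; by apply: Hl; rewrite inE Hy orbT.
have Hsz : leq (size (map (fun x => x - x * a1) l)) n by rewrite size_map.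
have [a' [Aa' Ha']] := IH _ Hsz Hl'.
exists (a1 + a' - a1 * a'); split; first exact: Acl.
move=> x; rewrite inE => /orP [/eqP ->|Hx].
  by rewrite mulrBr mulrDr mulrA Ha1 addrK.
have := Ha' (x - x * a1) (map_f _ Hx).
by rewrite mulrBr mulrDr mulrBl -mulrA -addrA => ->; rewrite addrC subrK.
Qed.

End Aux.

Section Main.
Variables (G : groupType) (S : pzRingType) (Sg : G -> S -> Prop).
Hypothesis HG : is_grading Sg.

Lemma Hsub g : additive_subgroup (Sg g).
Proof. by case: HG. Qed.

Lemma Hmul g h x y : Sg g x -> Sg h y -> Sg (g * h)%g (x * y).
Proof. by case: HG => _ H _ _; apply: H. Qed.

Lemma Xtri g x y x' : Sg g x -> Sg g^-1%g y -> Sg g x' -> Sg g (x * y * x').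
Proof.
move=> Hx Hy Hx'; have := Hmul (Hmul Hx Hy) Hx'.
by rewrite mulgV mul1g.
Qed.

Lemma Xtri' g x y x' : Sg g^-1%g x -> Sg g y -> Sg g^-1%g x' ->
  Sg g^-1%g (x * y * x').
Proof.
move=> Hx Hy Hx'; have := Hmul (Hmul Hx Hy) Hx'.
by rewrite mulVg mul1g.
Qed.

Lemma Xneg g x : Sg g x -> Sg g (-1 * x).
Proof.
move=> Hx; rewrite mulN1r -sub0r; case: (Hsub g) => H0 HB; exact: HB.
Qed.

Lemma I_cl g a b : prodset (Sg g) (Sg g^-1%g) a -> prodset (Sg g) (Sg g^-1%g) b ->
  prodset (Sg g) (Sg g^-1%g) (a + b - b * a).
Proof.
apply: prodset_sub; [exact: Xneg | exact: Xtri].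
Qed.

Lemma J_cl g a b : prodset (Sg g^-1%g) (Sg g) a -> prodset (Sg g^-1%g) (Sg g) b ->
  prodset (Sg g^-1%g) (Sg g) (a + b - a * b).
Proof.
move=> Ha Hb; rewrite (addrC a).
apply: prodset_sub => //; [exact: Xneg | exact: Xtri'].
Qed.

Lemma Mcl_l g m a : Sg g m -> prodset (Sg g) (Sg g^-1%g) a -> Sg g (m - a * m).
Proof.
move=> Hm [l [Hl ->]]; case: (Hsub g) => H0 HB; apply: HB => //.
rewrite mulr_suml; apply: sub_sum; first exact: Hsub.
by move=> p Hp; have [? ?] := Hl p Hp; apply: Xtri.
Qed.

Lemma Mcl_r g m a : Sg g m -> prodset (Sg g^-1%g) (Sg g) a -> Sg g (m - m * a).
Proof.
move=> Hm [l [Hl ->]]; case: (Hsub g) => H0 HB; apply: HB => //.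
rewrite mulr_sumr; apply: sub_sum; first exact: Hsub.
by move=> p Hp; have [? ?] := Hl p Hp; rewrite mulrA; apply: Xtri.
Qed.

Hypothesis Hn : nearly_epsilon_strongly_graded Sg.

Lemma right_unit g : fin_gen_left_module (Sg 1%g) (Sg g) ->
  exists b, prodset (Sg g^-1%g) (Sg g) b /\ forall s, Sg g s -> s * b = s.
Proof.
move=> [gens [Hgens Hsp]].
have [b [Hb Hbu]] := @common_right _ _ _ (prodset0 _ _ _) (@J_cl g)
  (fun m Hm => proj2 (Hn Hm)) (@Mcl_r g) _ Hgens.
exists b; split => // s /Hsp [rs [Hsz _ ->]].
rewrite mulr_suml; apply: eq_bigr => i _; rewrite -mulrA Hbu //.
exact: mem_nth.
Qed.

Lemma LU g c : prodset (Sg g) (Sg g^-1%g) c ->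
  (forall y, Sg g^-1%g y -> y * c = y) -> forall s, Sg g s -> c * s = s.
Proof.
move=> Hc Hcu s Hs; case: (Hc) => [l [Hl Hcdef]].
have Hall : forall m, m \in s :: map fst l -> Sg g m.
  move=> m; rewrite inE => /orP [/eqP -> //|/mapP [p Hp ->]].
  by have [] := Hl p Hp.
have [a [Ha Hau]] := @common_left _ _ _ (prodset0 _ _ _) (@I_cl g)
  (fun m Hm => proj1 (Hn Hm)) (@Mcl_l g) _ Hall.
have E1 : a * c = c.
  rewrite Hcdef sum_lunit // => p Hp; apply: Hau.
  by rewrite inE (map_f fst Hp) orbT.
have E2 : a * c = a.
  case: Ha => [la [Hla ->]]; apply: sum_runit => p Hp.
  by apply: Hcu; case: (Hla p Hp).
rewrite -E1 E2; apply: Hau; exact: mem_head.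
Qed.

End Main.
Unset Implicit Arguments.

Theorem mainTheorem5 (G : groupType) (S : pzRingType) (Sg : G -> S -> Prop) :
  is_grading Sg ->
  (epsilon_strongly_graded Sg <->
   (nearly_epsilon_strongly_graded Sg /\
    forall g : G, fin_gen_left_module (Sg 1%g) (Sg g))).
Proof.
move=> HG; split.
  move=> He; split.
    move=> g s Hs; have [e [e' [[Ie _] [Ie' _] Hu]]] := He g.
    by split; [exists e | exists e']; split => //; case: (Hu s Hs).
  move=> g; have [e [e' [[Ie _] [Ie' _] Hu]]] := He g.
  case: Ie' => [l [Hl He']].
  exists (map snd l); split.
    by move=> x /mapP [p Hp ->]; case: (Hl p Hp).
  move=> s Hs; exists (map (fun p => s * p.1) l); split.
  - by rewrite !size_map.
  - move=> r /mapP [p Hp ->]; have [H1 _] := Hl p Hp.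
    by have := @Hmul _ _ _ HG _ _ _ _ Hs H1; rewrite mulgV.
  - rewrite -{1}(proj2 (Hu s Hs)).
    rewrite He' mulr_sumr (big_nth (0, 0)) big_mkord size_map.
    apply: eq_bigr => i _.
    by rewrite !(nth_map (0, 0)) // mulrA.
move=> [Hn Hfg] g.
have [b [Hb Hbu]] := @right_unit _ _ _ HG Hn g (Hfg g).
have [c [Hc Hcu]] := @right_unit _ _ _ HG Hn g^-1%g (Hfg g^-1%g).
rewrite invgK in Hc.
have Lc := @LU _ _ _ HG Hn g c Hc Hcu.
have Hb' : prodset (Sg g^-1%g) (Sg g^-1^-1%g) b by rewrite invgK.
have Hbu' : forall y, Sg g^-1^-1%g y -> y * b = y by rewrite invgK.
have Lb := @LU _ _ _ HG Hn g^-1%g b Hb' Hbu'.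
exists c, b; split.
- split => // x [l [Hl ->]]; split.
    by apply: sum_lunit => p Hp; apply: Lc; case: (Hl p Hp).
  by apply: sum_runit => p Hp; apply: Hcu; case: (Hl p Hp).
- split => // x [l [Hl ->]]; split.
    by apply: sum_lunit => p Hp; apply: Lb; case: (Hl p Hp).
  by apply: sum_runit => p Hp; apply: Hbu; case: (Hl p Hp).
- by move=> s Hs; split; [apply: Lc | apply: Hbu].
Qed.
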